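(* Let $\mathcal{X}$ be a finite set and $\underline{Q}$ a lower transition rate operator on $\mathcal{L}(\mathcal{X})$. Then for all $f\in\mathcal{L}(\mathcal{X})$, $x\in\mathcal{X}$ and $t,s>0$: (1) if $f(x)>\min f$ then $\underline{T}_tf(x)>\min f$; and $\underline{T}_tf(x)>\min f\iff\underline{T}_sf(x)>\min f$; (2) if $f(x)<\max f$ then $\underline{T}_tf(x)<\max f$; and $\underline{T}_tf(x)<\max f\iff\underline{T}_sf(x)<\max f$; (3) if $f(x)>\min f$ then $\overline{T}_tf(x)>\min f$; and $\overline{T}_tf(x)>\min f\iff\overline{T}_sf(x)>\min f$; (4) if $f(x)<\max f$ then $\overline{T}_tf(x)<\max f$; and $\overline{T}_tf(x)<\max f\iff\overline{T}_sf(x)<\max f$.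
   Context: $\mathcal{L}(\mathcal{X})$ is the set of real-valued functions on $\mathcal{X}$ with pointwise operations and order, real constants identified with constant functions, $\mathbb{I}_y$ the indicator of $\{y\}$. A lower transition rate operator is a map $\underline{Q}\colon\mathcal{L}(\mathcal{X})\to\mathcal{L}(\mathcal{X})$ such that for all $f,g$, $\lambda\ge0$, $\mu\in\mathbb{R}$, $x,y\in\mathcal{X}$: $\underline{Q}(\mu)=0$; $\underline{Q}(f+g)\ge\underline{Q}f+\underline{Q}g$; $\underline{Q}(\lambda f)=\lambda\underline{Q}f$; $x\ne y\Rightarrow\underline{Q}(\mathbb{I}_y)(x)\ge0$. For each $f$, $t\mapsto\underline{T}_tf$ is the unique solution on $[0,\infty)$ of $\frac{d}{dt}\underline{T}_tf=\underline{Q}\,\underline{T}_tf$ with $\underline{T}_0f=f$ (existence and uniqueness are known), and $\overline{T}_tf\coloneqq-\underline{T}_t(-f)$. *)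

(* Defs.v *)
From HB Require Import structures.
From mathcomp Require Import all_boot all_order all_algebra.
From mathcomp Require Import all_classical all_reals all_analysis.
Set Implicit Arguments. Unset Strict Implicit. Unset Printing Implicit Defensive.
Import Order.TTheory GRing.Theory Num.Theory.
Import numFieldNormedType.Exports.
Local Open Scope classical_set_scope.
Local Open Scope ring_scope.

(* L(X) = X -> R; real constants are constant functions; indicator of {y}. *)
Definition cst_fun {X : finType} {R : realType} (mu : R) : X -> R := fun _ => mu.
Definition ind1 {X : finType} {R : realType} (y : X) : X -> R :=
  fun z => if z == y then 1 else 0.

Definition lower_rate_op {X : finType} {R : realType}
  (Q : (X -> R) -> (X -> R)) : Prop :=
  [/\ (forall mu : R, Q (cst_fun mu) = cst_fun 0),
      (forall (f g : X -> R) (x : X), Q f x + Q g x <= Q (fun z => f z + g z) x),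
      (forall (l : R) (f : X -> R), 0 <= l -> Q (fun z => l * f z) = (fun z => l * Q f z))
    & (forall x y : X, x != y -> 0 <= Q (ind1 y) x)].

(* T : R -> (X -> R) -> (X -> R) is the lower transition operator generated by Q:
   for each f, t |-> T t f solves d/dt T_t f = Q (T_t f) on [0, +oo) with T_0 f = f
   (derivative taken componentwise; right derivative at t = 0). *)
Definition solves_lower_ode {X : finType} {R : realType}
  (Q : (X -> R) -> (X -> R)) (T : R -> (X -> R) -> (X -> R)) : Prop :=
  forall f : X -> R,
    T 0 f = f /\
    (forall x : X,
       (forall t : R, 0 < t -> is_derive t 1 (fun s => T s f x) (Q (T t f) x)) /\
       ((fun h : R => h^-1 * (T h f x - f x)) @ 0^'+ --> Q f x)).

Definition upper_T {X : finType} {R : realType}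
  (T : R -> (X -> R) -> (X -> R)) (t : R) (f : X -> R) : X -> R :=
  fun x => - T t (fun z => - f z) x.

(* min and max of f over the (nonempty, since x0 : X) finite set X *)
Definition fmin {X : finType} {R : realType} (f : X -> R) (x0 : X) : R :=
  \big[Order.min/f x0]_(y : X) f y.
Definition fmax {X : finType} {R : realType} (f : X -> R) (x0 : X) : R :=
  \big[Order.max/f x0]_(y : X) f y.

(* Main.v *)
Require Import Defs.
From HB Require Import structures.
From mathcomp Require Import all_boot all_order all_algebra.
From mathcomp Require Import all_classical all_reals all_analysis.
From mathcomp Require Import ring lra.
Import Order.TTheory GRing.Theory Num.Theory.
Import numFieldNormedType.Exports.
Set Implicit Arguments. Unset Strict Implicit. Unset Printing Implicit Defensive.
Local Open Scope classical_set_scope.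
Local Open Scope ring_scope.

Section Sign.
Variable R : realType.

Lemma quot_cvg (phi : R -> R) (tau d : R) : is_derive tau 1 phi d ->
  (fun h : R => h^-1 * (phi (h + tau) - phi tau)) @ 0^' --> d.
Proof.
move=> [dv <-]; rewrite /derive.
apply: cvg_trans _ dv.
apply: near_eq_cvg; near=> h; rewrite /= /shift.
by rewrite [h *: 1]mulr1.
Unshelve. all: by end_near.
Qed.

Lemma left_min_der (phi : R -> R) (tau d delta : R) : is_derive tau 1 phi d ->
  0 < delta -> (forall s, tau - delta < s < tau -> phi tau <= phi s) -> d <= 0.
Proof.
move=> hd dp H; rewrite leNgt; apply/negP => d0.
have q := quot_cvg hd.
have ql : (fun h : R => h^-1 * (phi (h + tau) - phi tau)) @ 0^'- --> d.
  exact: cvg_dnbhs_at_left.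
have hn : \forall h \near (0:R)^'-, [/\ 0 < h^-1 * (phi (h + tau) - phi tau), h < 0 & - delta < h].
  near=> h; split.
  - by near: h; apply: cvgr_gt ql _ d0.
  - by near: h; apply: nbhs_left_lt.
  - near: h; have : \forall h \near (0:R), - delta < h.
      by apply: lt_nbhsr; rewrite oppr_lt0.
    by apply: filterS => h hh _.
have [h [h1 h2 h3]] := filter_ex hn.
have : phi tau <= phi (h + tau).
  apply: H; apply/andP; split; lra.
rewrite -subr_ge0 => hge.
by move: h1; rewrite nmulr_rgt0 ?invr_lt0 // => h1; lra.
Unshelve. all: by end_near.
Qed.

Lemma right_min_der (phi : R -> R) (tau d delta : R) : is_derive tau 1 phi d ->
  0 < delta -> (forall s, tau < s < tau + delta -> phi tau <= phi s) -> 0 <= d.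
Proof.
move=> hd dp H; rewrite leNgt; apply/negP => d0.
have q := quot_cvg hd.
have ql : (fun h : R => h^-1 * (phi (h + tau) - phi tau)) @ 0^'+ --> d.
  exact: cvg_dnbhs_at_right.
have hn : \forall h \near (0:R)^'+, [/\ h^-1 * (phi (h + tau) - phi tau) < 0, 0 < h & h < delta].
  near=> h; split.
  - by near: h; apply: cvgr_lt ql _ d0.
  - by near: h; apply: nbhs_right_gt.
  - by near: h; apply: nbhs_right_lt.
have [h [h1 h2 h3]] := filter_ex hn.
have : phi tau <= phi (h + tau).
  apply: H; apply/andP; split; lra.
rewrite -subr_ge0 => hge.
by move: h1; rewrite pmulr_rlt0 ?invr_gt0 // => h1; lra.
Unshelve. all: by end_near.
Qed.

Lemma der_cont (phi : R -> R) (t d : R) : is_derive t 1 phi d -> phi x @[x --> t] --> phi t.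
Proof. by move=> [dv _]; exact/differentiable_continuous/derivable1_diffP. Qed.

Lemma is_derive_expk (k t : R) : is_derive t 1 (fun s => expR (k * s)) (expR (k * t) * k).
Proof.
have h1 : is_derive t 1 (fun s : R => k * s) k.
  move: (is_deriveZ k (is_derive_id t 1)) => /is_derive_eq; apply.
  exact: mulr1.
exact: (is_derive1_comp (f := expR) (g := fun s => k * s)).
Qed.

Lemma gronwall (phi dphi : R -> R) (a k : R) :
  (forall t, a < t -> is_derive t 1 phi (dphi t)) ->
  phi x @[x --> a^'+] --> phi a ->
  (forall t, a < t -> k * phi t <= dphi t) ->
  forall t, a <= t -> expR (k * (t - a)) * phi a <= phi t.
Proof.
move=> D C K t; rewrite le_eqVlt => /predU1P [<-|hat]; first by rewrite subrr mulr0 expR0 mul1r.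
pose e := fun s : R => expR (- k * s).
pose psi := e * phi.
have Dpsi' : forall x, a < x -> is_derive x 1 psi (e x * dphi x + phi x * (e x * - k)).
  move=> x ax.
  have := is_deriveM (is_derive_expk (-k) x) (D x ax).
  by rewrite /= /e.
have Dpsi : forall x, x \in `]a, t[ -> is_derive x 1 psi (e x * dphi x + phi x * (e x * - k)).
  by move=> x; rewrite in_itv /= => /andP[ax _]; apply: Dpsi'.
have Cpsi : {within `[a, t], continuous psi}.
  apply/(continuous_within_itvP _ hat); split.
  - by move=> x hx; exact: (der_cont (Dpsi x hx)).
  - apply: cvgM; last exact: C.
    apply: cvg_at_right_filter; apply: continuous_comp; last exact: continuous_expR.
    exact: cvgZr.
  - apply: cvg_at_left_filter; exact: der_cont (Dpsi' t hat).
have [c hc eqc] := MVT hat Dpsi Cpsi.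
have le_psi : psi a <= psi t.
  rewrite -subr_ge0 eqc; apply: mulr_ge0; last by rewrite subr_ge0 ltW.
  move: hc; rewrite in_itv /= => /andP[ac _].
  have := K c ac; have := expR_gt0 (- k * c); rewrite -/(e c) => ep Kc.
  rewrite mulrCA -mulrDr; apply: mulr_ge0; first exact: ltW.
  lra.
move: le_psi; rewrite /psi /= /e => le_psi.
have := ler_wpM2l (ltW (expR_gt0 (k * t))) le_psi.
rewrite !mulrA -!expRD.
have -> : k * t + - k * t = 0 by ring.
rewrite expR0 mul1r.
by have -> : k * t + - k * a = k * (t - a) by ring.
Qed.

Lemma near_right_ex (t : R) (P : R -> Prop) : (\forall s \near t^'+, P s) ->
  exists2 d, 0 < d & forall s, t < s < t + d -> P s.
Proof.
move=> /nbhs_ballP [d d0 H]; exists d => // s /andP[a b]; apply: H => //.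
rewrite /ball /= ltr_norml; apply/andP; split; lra.
Qed.

End Sign.


Definition propA (R : realType) (X : finType) (P : (X -> R) -> (X -> R)) :=
  forall u y, (forall z, u y <= u z) -> 0 <= P u y.
Definition propB (R : realType) (X : finType) (P : (X -> R) -> (X -> R)) :=
  exists c, 0 <= c /\ forall u y, (forall z, 0 <= u z) -> - (c * u y) <= P u y.
Definition propC (R : realType) (X : finType) (P : (X -> R) -> (X -> R)) :=
  exists C, 0 <= C /\ forall (A : pred X) w u y, (forall z, 0 <= u z) -> (forall z, 0 <= w z) ->
    (forall z, z \notin A -> 0 < w z) -> (forall z, z \in A -> w z = 0) -> y \in A ->
    P w y <= 0 -> P u y <= C * \sum_(z in A) u z.

Section QLemmas.
Variables (R : realType) (X : finType) (Q : (X -> R) -> (X -> R)).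
Hypothesis hQ : lower_rate_op Q.

Lemma Qcst (c : R) x : Q (fun _ => c) x = 0.
Proof. by case: hQ => h _ _ _; rewrite (h c). Qed.

Lemma Qsup (f g : X -> R) x : Q f x + Q g x <= Q (fun z => f z + g z) x.
Proof. by case: hQ => _ h _ _; apply: h. Qed.

Lemma Qhom (l : R) (f : X -> R) x : 0 <= l -> Q (fun z => l * f z) x = l * Q f x.
Proof. by case: hQ => _ _ h _ l0; rewrite (h l f l0). Qed.

Lemma Qind (x y : X) : x != y -> 0 <= Q (ind1 y) x.
Proof. by case: hQ => _ _ _ h; apply: h. Qed.

Lemma Qext (f g : X -> R) x : (forall z, f z = g z) -> Q f x = Q g x.
Proof. by move=> e; rewrite (_ : f = g) //; apply/funext. Qed.

Lemma QsupE (f g h : X -> R) x : (forall z, f z + g z = h z) -> Q f x + Q g x <= Q h x.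
Proof. by move=> e; rewrite -(@Qext (fun z => f z + g z) h) //; apply: Qsup. Qed.

Lemma Qshift (g : X -> R) (c : R) x : Q (fun z => g z + c) x = Q g x.
Proof.
apply/eqP; rewrite eq_le; apply/andP; split.
- have := @QsupE (fun z => g z + c) (fun _ => - c) g x.
  by rewrite Qcst addr0; apply => z; ring.
- by have := Qsup g (fun _ => c) x; rewrite Qcst addr0.
Qed.

Lemma Qneg (g : X -> R) x : Q g x <= - Q (fun z => - g z) x.
Proof.
have := @QsupE g (fun z => - g z) (fun _ => 0) x.
rewrite Qcst => h; have {}h := h (fun z => subrr (g z)); lra.
Qed.

Lemma Qlin (I : finType) (u : I -> R) (G : I -> X -> R) x : (forall i, 0 <= u i) ->
  \sum_i u i * Q (G i) x <= Q (fun z => \sum_i u i * G i z) x.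
Proof.
move=> u0; rewrite /index_enum; elim: (Finite.enum I) => [|i r IH].
  rewrite big_nil (@Qext _ (fun _ => 0)) ?Qcst // => z; by rewrite big_nil.
rewrite big_cons.
apply: le_trans (@QsupE (fun z => u i * G i z) _ _ x _); last by move=> z; rewrite big_cons.
by rewrite Qhom // lerD2l.
Qed.

Lemma sum_ind (u : X -> R) z : \sum_y u y * ind1 y z = u z.
Proof.
rewrite (bigD1 z) //= /ind1 eqxx mulr1 big1 ?addr0 // => y yz.
by rewrite ifN ?mulr0 // eq_sym.
Qed.

Lemma Qdecomp (u : X -> R) x : (forall z, 0 <= u z) ->
  \sum_y u y * Q (ind1 y) x <= Q u x.
Proof.
move=> u0; have := Qlin ind1 x u0.
by rewrite (@Qext _ u) // => z; exact: sum_ind.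
Qed.

Lemma Qind_self x : Q (ind1 x) x <= 0.
Proof.
have := @Qdecomp (fun _ => 1) x (fun _ => ler01).
rewrite Qcst (bigD1 x) //= mul1r.
have : 0 <= \sum_(y | y != x) 1 * Q (ind1 y) x.
  by apply: sumr_ge0 => y yx; rewrite mul1r Qind // eq_sym.
lra.
Qed.

Lemma Qlow (u : X -> R) x : (forall z, 0 <= u z) -> u x * Q (ind1 x) x <= Q u x.
Proof.
move=> u0; have := Qdecomp x u0; rewrite (bigD1 x) //=.
have : 0 <= \sum_(y | y != x) u y * Q (ind1 y) x.
  by apply: sumr_ge0 => y yx; rewrite mulr_ge0 // Qind // eq_sym.
lra.
Qed.

Lemma Qmin (u : X -> R) y : (forall z, u y <= u z) -> 0 <= Q u y.
Proof.
move=> umin; rewrite -(Qshift u (- u y) y).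
have := @Qlow (fun z => u z + - u y) y.
rewrite subrr mul0r; apply => z; rewrite subr_ge0; exact: umin.
Qed.

Definition Cneg := \sum_z \sum_y `|Q (fun w => - ind1 z w) y|.

Lemma le_Cneg z y : `|Q (fun w => - ind1 z w) y| <= Cneg.
Proof.
rewrite /Cneg (bigD1 z) //= (bigD1 y) //=.
have h1 : 0 <= \sum_(i | i != y) `|Q (fun w => - ind1 z w) i|.
  by apply: sumr_ge0 => *.
have h2 : 0 <= \sum_(i | i != z) \sum_y0 `|Q (fun w => - ind1 i w) y0|.
  by apply: sumr_ge0 => *; apply: sumr_ge0 => *.
lra.
Qed.

Lemma Cneg_ge0 : 0 <= Cneg.
Proof. by apply: sumr_ge0 => *; apply: sumr_ge0 => *. Qed.

Lemma Qneg_part (A : pred X) (u : X -> R) y : (forall z, 0 <= u z) ->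
  - (Cneg * \sum_(z in A) u z) <= Q (fun w => - (if w \in A then u w else 0)) y.
Proof.
move=> u0; set uA := fun z => if z \in A then u z else 0.
have uA0 : forall z, 0 <= uA z by move=> z; rewrite /uA; case: ifP.
have := Qlin (fun z w => - ind1 z w) y uA0.
rewrite (@Qext _ (fun w => - uA w)); last first.
  move=> z; rewrite -(sum_ind uA z) -sumrN; apply: eq_bigr => i _; ring.
apply: le_trans.
rewrite big_mkcond /= mulr_sumr -sumrN; apply: ler_sum => z _.
rewrite -/(uA z).
have := le_Cneg z y; have := uA0 z.
set q := Q _ y => h0 hq.
have : - (uA z * Cneg) <= - (uA z * `|q|) by rewrite lerN2 ler_wpM2l.
have : - (uA z * `|q|) <= uA z * q.
  by rewrite -mulrN ler_wpM2l // lerNl -normrN ler_norm.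
lra.
Qed.

Lemma lam_exists (A : pred X) (u w : X -> R) y :
  (forall z, 0 <= u z) -> (forall z, 0 <= w z) ->
  (forall z, z \notin A -> 0 < w z) -> (forall z, z \in A -> w z = 0) -> y \in A ->
  exists l, [/\ 0 <= l,
     (forall z, l * w z - (if z \in A then 0 else u z) + (if z \in A then 0 else u z) = l * w z) &
     0 <= Q (fun z => l * w z - (if z \in A then 0 else u z)) y].
Proof.
move=> u0 w0 wA wA0 yA.
set uS := fun z => if z \in A then 0 else u z.
have uS0 : forall z, 0 <= uS z by move=> z; rewrite /uS; case: ifP.
pose l := \sum_z uS z / w z.
have l0 : forall z, 0 <= uS z / w z by move=> z; rewrite divr_ge0.
have lz : forall z, uS z / w z <= l.
  move=> z; rewrite /l (bigD1 z) //=.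
  have : 0 <= \sum_(i | i != z) uS i / w i by apply: sumr_ge0.
  lra.
exists l; split.
- by apply: sumr_ge0.
- by move=> z; ring.
- have := @Qlow (fun z => l * w z - uS z) y.
  rewrite /uS yA wA0 // mulr0 subr0 mul0r; apply => z.
  case: (boolP (z \in A)) => zA; first by rewrite wA0 // mulr0 subr0.
  rewrite subr_ge0; have := lz z; rewrite /uS (negPf zA) => h.
  have wz := wA z zA.
  by rewrite -ler_pdivrMr // mulrC.
Qed.

Lemma Qlow_unif : exists c, 0 <= c /\ forall u y, (forall z, 0 <= u z) -> - (c * u y) <= Q u y.
Proof.
exists (\sum_y - Q (ind1 y) y); split.
  by apply: sumr_ge0 => y _; rewrite oppr_ge0 Qind_self.
move=> u y u0; apply: le_trans (Qlow y u0).
have : - Q (ind1 y) y <= \sum_y - Q (ind1 y) y.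
  rewrite (bigD1 y) //=.
  have : 0 <= \sum_(i | i != y) - Q (ind1 i) i by apply: sumr_ge0 => i _; rewrite oppr_ge0 Qind_self.
  lra.
move=> h; have := u0 y; move: h.
set q := Q (ind1 y) y; set C := \sum_y0 _; move=> h hu.
have : 0 <= u y * (q + C) by apply: mulr_ge0 => //; lra.
lra.
Qed.

Lemma propA1 : propA Q.
Proof. move=> u y; exact: Qmin. Qed.

Lemma propB1 : propB Q.
Proof. exact: Qlow_unif. Qed.

Lemma propA2 : propA (fun u y => - Q (fun z => - u z) y).
Proof. by move=> u y h; apply: le_trans (Qneg _ _); apply: Qmin. Qed.

Lemma propB2 : propB (fun u y => - Q (fun z => - u z) y).
Proof.
have [c [c0 H]] := Qlow_unif; exists c; split => // u y u0.
by apply: le_trans (H u y u0) _; apply: Qneg.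
Qed.

Lemma propC1 : propC Q.
Proof.
exists Cneg; split; first exact: Cneg_ge0.
move=> A w u y u0 w0 wA wA0 yA Pw.
have [l [l0 _ hl]] := lam_exists u0 w0 wA wA0 yA.
set uS := fun z => if z \in A then 0 else u z.
have h1 := @QsupE u (fun w => - (if w \in A then u w else 0)) uS y.
have {}h1 : Q u y + Q (fun w => - (if w \in A then u w else 0)) y <= Q uS y.
  by apply: h1 => z; rewrite /uS; case: ifP => _; ring.
have h2 := @QsupE uS (fun z => l * w z - uS z) (fun z => l * w z) y.
have {}h2 : Q uS y + Q (fun z => l * w z - uS z) y <= l * Q w y.
  by rewrite -Qhom //; apply: h2 => z; ring.
have h3 : l * Q w y <= 0 by rewrite mulr_ge0_le0.
have h4 := Qneg_part A y u0.
lra.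
Qed.

Lemma propC2 : propC (fun u y => - Q (fun z => - u z) y).
Proof.
exists Cneg; split; first exact: Cneg_ge0.
move=> A w u y u0 w0 wA wA0 yA Pw.
have [l [l0 _ hl]] := lam_exists u0 w0 wA wA0 yA.
set uS := fun z => if z \in A then 0 else u z.
have h1 := @QsupE (fun w => - (if w \in A then u w else 0)) (fun z => - uS z) (fun z => - u z) y.
have {}h1 : Q (fun w => - (if w \in A then u w else 0)) y + Q (fun z => - uS z) y <= Q (fun z => - u z) y.
  by apply: h1 => z; rewrite /uS; case: ifP => _; ring.
have h2 := @QsupE (fun z => l * - w z) (fun z => l * w z - uS z) (fun z => - uS z) y.
have {}h2 : l * Q (fun z => - w z) y + Q (fun z => l * w z - uS z) y <= Q (fun z => - uS z) y.
  by rewrite -Qhom //; apply: h2 => z; ring.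
have h3 : 0 <= l * Q (fun z => - w z) y by rewrite mulr_ge0 //; lra.
have h4 := Qneg_part A y u0.
lra.
Qed.

End QLemmas.

Lemma lin_der (R : realType) (e s : R) : is_derive s 1 (fun s => e + e * s) e.
Proof.
have := is_deriveD (is_derive_cst e s 1) (is_deriveZ e (is_derive_id s 1)).
move/is_derive_eq; apply; rewrite add0r; exact: mulr1.
Qed.

Lemma is_derive_bigsum (R : realType) (I : finType) (A : pred I) (F : I -> R -> R)
  (dF : I -> R) (t : R) : (forall i, is_derive t 1 (F i) (dF i)) ->
  is_derive t 1 (fun s => \sum_(i in A) F i s) (\sum_(i in A) dF i).
Proof.
move=> H; rewrite -fct_sumE.
by elim/big_ind2 : _ => // [|] *; [exact: is_derive_cst|exact: is_deriveD].
Qed.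

Section Dyn.
Variables (R : realType) (X : finType) (P : (X -> R) -> (X -> R)) (U : R -> X -> R).
Hypotheses (PA : propA P) (PB : propB P) (PC : propC P).
Hypothesis U0 : forall y, 0 <= U 0 y.
Hypothesis Urc : forall y, U h y @[h --> 0^'+] --> U 0 y.
Hypothesis UD : forall (y : X) (t : R), 0 < t -> is_derive t 1 (fun s => U s y) (P (U t) y).

Lemma Urc_all y a : 0 <= a -> U h y @[h --> a^'+] --> U a y.
Proof.
rewrite le_eqVlt => /predU1P[<-|a0]; first exact: Urc.
exact/cvg_at_right_filter/(der_cont (UD y a0)).
Qed.

Lemma invariance t y : 0 <= t -> 0 <= U t y.
Proof.
move=> t10; rewrite leNgt; apply/negP => neg.
pose eps := - U t y / (2 * (1 + t)).
have eps0 : 0 < eps by rewrite /eps divr_gt0 //; [lra | apply: mulr_gt0; lra].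
pose psi z s := U s z + (eps + eps * s).
have hpsi1 : psi y t < 0.
  have e : eps + eps * t = - U t y / 2.
    by rewrite /eps; field; lra.
  rewrite /psi e; lra.
have Dpsi (z : X) (s : R) : 0 < s -> is_derive s 1 (psi z) (P (U s) z + eps).
  by move=> s0; exact: (is_deriveD (UD z s0) (lin_der eps s)).
have rc (z : X) (s : R) : 0 <= s -> psi z x @[x --> s^'+] --> psi z s.
  move=> s0; apply: cvgD; first exact: Urc_all.
  exact/cvg_at_right_filter/(der_cont (lin_der eps s)).
pose S := [set s | 0 <= s /\ exists z, psi z s <= 0].
have S1 : S t by split => //; exists y; lra.
have Slb : lbound S 0 by move=> s [].
have hinf : has_inf S by split; [exists t | exists 0].
pose tau := inf S.
have tau0 : 0 <= tau by apply: lb_le_inf => //; exists t.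
have before : forall s, 0 <= s -> s < tau -> forall z, 0 < psi z s.
  move=> s s0 st z; rewrite ltNge; apply/negP => h.
  have Ss : S s by split => //; exists z.
  have := ge_inf (proj2 hinf) Ss; rewrite -/tau; lra.
have atau : exists z, psi z tau <= 0.
  have [//|H] := pselect (exists z, psi z tau <= 0).
  have Hy : forall z, 0 < psi z tau.
    by move=> z; rewrite ltNge; apply/negP => h; apply: H; exists z.
  have nr : \forall s \near tau^'+, forall z, 0 < psi z s.
    apply: (@filter_forall _ X (fun z s => 0 < psi z s)) => z.
    exact: (cvgr_gt _ (rc z tau tau0) _ (Hy z)).
  have [d d0 Hd] := near_right_ex nr.
  have [e Se elt] := inf_adherent d0 hinf.
  have te : tau <= e := ge_inf (proj2 hinf) Se.
  case: Se => e0 [z hz].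
  have : 0 < psi z e.
    move: te; rewrite le_eqVlt => /predU1P [<-|te]; first exact: Hy.
    by apply: Hd; apply/andP; split.
  lra.
have taupos : 0 < tau.
  case: atau => z hz; rewrite lt_neqAle tau0 andbT; apply/eqP => t0.
  by move: hz; rewrite -t0 /psi; have := U0 z; lra.
have attau : forall z, 0 <= psi z tau.
  move=> z; rewrite leNgt; apply/negP => hz.
  have cz : psi z x @[x --> tau] --> psi z tau := der_cont (Dpsi z tau taupos).
  have nl : \forall s \near tau^'-, [/\ psi z s < 0, 0 < s & s < tau].
    near=> s; split.
    - near: s; exact: (cvgr_lt _ (cvg_at_left_filter cz) _ hz).
    - near: s; have : \forall s \near tau, 0 < s by apply: lt_nbhsr.
      by apply: filterS => s hs _.
    - near: s; exact: nbhs_left_lt.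
  have := @filter_ex _ _ (at_left_proper_filter tau) _ nl; case => s [h1 h2 h3].
  have := before s (ltW h2) h3 z; lra.
case: atau => z hz.
have zmin : forall w, U tau z <= U tau w.
  by move=> w; have := attau w; move: hz; rewrite /psi; lra.
have Pge := PA zmin.
have := left_min_der (Dpsi z tau taupos) taupos.
have : forall s, tau - tau < s < tau -> psi z tau <= psi z s.
  move=> s /andP[a b]; have := before s _ b z; lra.
move=> H1 /(_ H1); lra.
Unshelve. all: by end_near.
Qed.

Lemma persist y a t : 0 <= a -> a <= t -> 0 < U a y -> 0 < U t y.
Proof.
move=> a0 hat ha.
have [c [c0 Hc]] := PB.
have D : forall s : R, a < s -> is_derive s 1 (fun s => U s y) (P (U s) y).
  move=> s hs; apply: UD; lra.
have K : forall s, a < s -> - c * U s y <= P (U s) y.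
  move=> s hs; rewrite mulNr; apply: Hc => z; apply: invariance; lra.
have := @gronwall R (fun s => U s y) (fun s => P (U s) y) a (- c) D (@Urc_all y a a0) K t hat.
move=> h; apply: lt_le_trans h; apply: mulr_gt0 => //; exact: expR_gt0.
Qed.

Lemma zero_prop y a b : 0 < a -> 0 < b -> U a y = 0 -> U b y = 0.
Proof.
move=> a0 b0 ha; case: (leP b a) => ba.
  apply/eqP; rewrite eq_le invariance ?andbT; last lra.
  rewrite leNgt; apply/negP => hb.
  by have := persist (ltW b0) ba hb; rewrite ha ltxx.
pose A := [pred z | U a z == 0].
have yA : y \in A by rewrite inE ha.
have Pw0 : forall z, z \in A -> P (U a) z <= 0.
  move=> z; rewrite inE => /eqP hz.
  apply: (left_min_der (UD z a0) a0) => s /andP[s1 s2].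
  rewrite hz; apply: invariance; lra.
have [C [C0 HC]] := PC.
pose K := C * #|A|%:R.
have Dv : forall s : R, 0 < s -> is_derive s 1 (fun s => \sum_(z in A) U s z) (\sum_(z in A) P (U s) z).
  move=> s s0; apply: is_derive_bigsum => z; exact: UD.
have D2 : forall s : R, a < s -> is_derive s 1 (fun s => - \sum_(z in A) U s z) (- \sum_(z in A) P (U s) z).
  move=> s hs; apply: is_deriveN; apply: Dv; lra.
have C2 : (fun s => - \sum_(z in A) U s z) x @[x --> a^'+] --> - \sum_(z in A) U a z.
  apply: cvg_at_right_filter; apply: der_cont; apply: is_deriveN; exact: Dv.
have K2 : forall s, a < s -> K * (- \sum_(z in A) U s z) <= - \sum_(z in A) P (U s) z.
  move=> s hs; rewrite mulrN lerN2.
  have : \sum_(z in A) P (U s) z <= \sum_(z in A) (C * \sum_(w in A) U s w).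
    apply: ler_sum => z zA; apply: (HC A (U a) (U s) z) => //.
    + move=> w; apply: invariance; lra.
    + move=> w; apply: invariance; lra.
    + move=> w; rewrite inE => hw; rewrite lt_neqAle eq_sym hw /=; apply: invariance; lra.
    + by move=> w; rewrite inE => /eqP.
    + exact: Pw0.
  move=> h; apply: (le_trans h); rewrite sumr_const /K -mulr_natr le_eqVlt; apply/orP; left; apply/eqP; ring.
have := @gronwall R (fun s => - \sum_(z in A) U s z) (fun s => - \sum_(z in A) P (U s) z) a K D2 C2 K2 b (ltW ba).
- have -> : \sum_(z in A) U a z = 0 by apply: big1 => z; rewrite inE => /eqP.
  rewrite oppr0 mulr0 oppr_ge0 => hv.
  have : U b y <= \sum_(z in A) U b z.
    rewrite (bigD1 y) //=.
    have : 0 <= \sum_(i in A | i != y) U b i by apply: sumr_ge0 => i _; apply: invariance; lra.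
    lra.
  have := @invariance b y (ltW b0).
  move=> h1 h2; apply/eqP; rewrite eq_le h1 andbT; lra.
Qed.

Lemma iff_pos y t s : 0 < t -> 0 < s -> (0 < U t y <-> 0 < U s y).
Proof.
move=> t0 s0; split => h.
- rewrite lt_neqAle invariance ?andbT; last lra.
  apply/eqP => hs; move: h; rewrite (zero_prop s0 t0 (esym hs)) ltxx //.
- rewrite lt_neqAle invariance ?andbT; last lra.
  apply/eqP => ht; move: h; rewrite (zero_prop t0 s0 (esym ht)) ltxx //.
Qed.

Lemma dyn_all : (forall y, 0 < U 0 y -> forall t, 0 <= t -> 0 < U t y) /\
  (forall y t s, 0 < t -> 0 < s -> (0 < U t y <-> 0 < U s y)).
Proof.
split; first by move=> y hy t t0; apply: (persist (le_refl 0) t0 hy).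
by move=> y t s t0 s0; apply: iff_pos.
Qed.

End Dyn.

Lemma T_rc (R : realType) (X : finType) (Q : (X -> R) -> (X -> R))
  (T : R -> (X -> R) -> (X -> R)) (f0 : X -> R) (y : X) :
  solves_lower_ode Q T -> T h f0 y @[h --> 0^'+] --> T 0 f0 y.
Proof.
move=> hT; have [T0 H] := hT f0; have [_ q] := H y.
rewrite T0.
have e : \forall h \near (0:R)^'+, f0 y + h * (h^-1 * (T h f0 y - f0 y)) = T h f0 y.
  near=> h; rewrite mulrA mulfV ?mul1r; first by ring.
  apply: lt0r_neq0; near: h; exact: nbhs_right_gt.
apply: cvg_trans (near_eq_cvg e) _.
have L : (fun h : R => f0 y + h * (h^-1 * (T h f0 y - f0 y))) @ 0^'+ --> f0 y + 0 * Q f0 y.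
  apply: cvgD; first exact: cvg_cst.
  apply: cvgM => //; exact/cvg_at_right_filter/cvg_id.
by rewrite mul0r addr0 in L.
Unshelve. all: by end_near.
Qed.

Lemma lower_inst (R : realType) (X : finType) (Q : (X -> R) -> (X -> R))
  (T : R -> (X -> R) -> (X -> R)) (f0 : X -> R) (m0 : R) :
  lower_rate_op Q -> solves_lower_ode Q T -> (forall y, m0 <= f0 y) ->
  (forall y, m0 < f0 y -> forall t, 0 <= t -> m0 < T t f0 y) /\
  (forall y t s, 0 < t -> 0 < s -> (m0 < T t f0 y <-> m0 < T s f0 y)).
Proof.
move=> hQ hT hm.
have [T0 H] := hT f0.
have := @dyn_all R X Q (fun t y => T t f0 y - m0) (propA1 hQ) (propB1 hQ) (propC1 hQ).
case.
- by move=> y; rewrite T0 subr_ge0.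
- move=> y; apply: cvgB; [exact: T_rc | exact: cvg_cst].
- move=> y t t0; have [D _] := H y.
  have := is_deriveB (D t t0) (is_derive_cst m0 t 1).
  move/is_derive_eq; apply; rewrite subr0.
  by rewrite (Qshift hQ (T t f0) (- m0) y).
- move=> h1 h2; split.
  + move=> y hy t t0; rewrite -subr_gt0; apply: h1 => //.
    by rewrite T0 subr_gt0.
  + move=> y t s t0 s0; rewrite -subr_gt0 -[m0 < T s f0 y]subr_gt0; exact: h2.
Qed.

Lemma upper_inst (R : realType) (X : finType) (Q : (X -> R) -> (X -> R))
  (T : R -> (X -> R) -> (X -> R)) (f0 : X -> R) (m0 : R) :
  lower_rate_op Q -> solves_lower_ode Q T -> (forall y, f0 y <= m0) ->
  (forall y, f0 y < m0 -> forall t, 0 <= t -> T t f0 y < m0) /\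
  (forall y t s, 0 < t -> 0 < s -> (T t f0 y < m0 <-> T s f0 y < m0)).
Proof.
move=> hQ hT hm.
have [T0 H] := hT f0.
have := @dyn_all R X (fun u y => - Q (fun z => - u z) y) (fun t y => m0 - T t f0 y)
  (propA2 hQ) (propB2 hQ) (propC2 hQ).
case.
- by move=> y; rewrite T0 subr_ge0.
- move=> y; apply: cvgB; [exact: cvg_cst | exact: T_rc].
- move=> y t t0; have [D _] := H y.
  have := is_deriveB (is_derive_cst m0 t 1) (D t t0).
  move/is_derive_eq; apply; rewrite sub0r; congr (- _).
  rewrite -(Qshift hQ (T t f0) (- m0) y); apply: Qext => z; ring.
- move=> h1 h2; split.
  + move=> y hy t t0; rewrite -subr_gt0; apply: h1 => //.
    by rewrite T0 subr_gt0.
  + move=> y t s t0 s0; rewrite -subr_gt0 -[T s f0 y < m0]subr_gt0; exact: h2.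
Qed.

Theorem proposition13 (R : realType) (X : finType)
  (Q : (X -> R) -> (X -> R)) (T : R -> (X -> R) -> (X -> R)) :
  lower_rate_op Q -> solves_lower_ode Q T ->
  forall (f : X -> R) (x : X) (t s : R), 0 < t -> 0 < s ->
  [/\ (fmin f x < f x -> fmin f x < T t f x) /\
        (fmin f x < T t f x <-> fmin f x < T s f x),
      (f x < fmax f x -> T t f x < fmax f x) /\
        (T t f x < fmax f x <-> T s f x < fmax f x),
      (fmin f x < f x -> fmin f x < upper_T T t f x) /\
        (fmin f x < upper_T T t f x <-> fmin f x < upper_T T s f x)
    & (f x < fmax f x -> upper_T T t f x < fmax f x) /\
        (upper_T T t f x < fmax f x <-> upper_T T s f x < fmax f x)].
Proof.
move=> hQ hT f x t s t0 s0.
have hmin : forall y, fmin f x <= f y by move=> y; exact: bigmin_le.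
have hmax : forall y, f y <= fmax f x by move=> y; exact: le_bigmax.
have [L1 L2] := lower_inst hQ hT hmin.
have [U1 U2] := upper_inst hQ hT hmax.
have hmax' : forall y, - fmax f x <= - f y by move=> y; rewrite lerN2.
have hmin' : forall y, - f y <= - fmin f x by move=> y; rewrite lerN2.
have [L3 L4] := @lower_inst R X Q T (fun z => - f z) (- fmax f x) hQ hT hmax'.
have [U3 U4] := @upper_inst R X Q T (fun z => - f z) (- fmin f x) hQ hT hmin'.
rewrite /upper_T; split; split.
- by move=> h; apply: L1 => //; exact: ltW.
- exact: L2.
- by move=> h; apply: U1 => //; exact: ltW.
- exact: U2.
- by move=> h; rewrite ltrNr; apply: U3; [rewrite ltrN2 | exact: ltW].
- have H := U4 x t s t0 s0; split => h; rewrite ltrNr; apply/H; rewrite -ltrNr //.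
- by move=> h; rewrite ltrNl; apply: L3; [rewrite ltrN2 | exact: ltW].
- have H := L4 x t s t0 s0; split => h; rewrite ltrNl; apply/H; rewrite -ltrNl //.
Qed.
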